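(* Let $K$ be a compact Hausdorff space and $F$ a closed subset of $K$. If $K$ satisfies the countable chain condition and $F$ admits an extension operator in $K$, then $F$ satisfies the countable chain condition.
   Context: A topological space satisfies the countable chain condition (ccc) if every family of pairwise disjoint nonempty open subsets is countable. $C(K)$ is the Banach space of real-valued continuous functions on $K$ with the supremum norm. An extension operator for $F$ in $K$ is a bounded linear map $E:C(F)\to C(K)$ with $E(f)|_F=f$ for all $f\in C(F)$. *)

(* Defs.v *)
From HB Require Import structures.
From mathcomp Require Import all_boot all_order all_algebra.
From mathcomp Require Import all_classical all_reals all_analysis.
Set Implicit Arguments. Unset Strict Implicit. Unset Printing Implicit Defensive.
Import Order.TTheory GRing.Theory Num.Theory.
Import numFieldNormedType.Exports.
Local Open Scope classical_set_scope.
Local Open Scope ring_scope.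

Definition rel_open {T : topologicalType} (A U : set T) : Prop :=
  exists V : set T, open V /\ U = V `&` A.

Definition ccc_on {T : topologicalType} (A : set T) : Prop :=
  forall UU : set (set T),
    (forall U, UU U -> rel_open A U) ->
    (forall U, UU U -> U !=set0) ->
    (forall U V, UU U -> UU V -> U <> V -> U `&` V = set0) ->
    countable UU.

(* C(F) is represented by the functions K -> R that are continuous on the
   subspace F (values outside F are irrelevant). *)
Definition CF {R : realType} {K : topologicalType} (F : set K) (f : K -> R) :=
  {within F, continuous f}.

Definition extension_operator {R : realType} {K : topologicalType}
    (F : set K) (E : (K -> R) -> (K -> R)) : Prop :=
  [/\ (forall f g, CF F f -> CF F g -> {in F, f =1 g} -> E f = E g),
      (forall f, CF F f -> continuous (E f)),
      (forall (a : R) f g, CF F f -> CF F g ->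
          E (fun x => a * f x + g x) = (fun x => a * E f x + E g x)),
      (exists M : R, forall f (c : R), CF F f ->
          (forall y, F y -> `|f y| <= c) -> forall x, `|E f x| <= M * c) &
      (forall f, CF F f -> forall x, F x -> E f x = f x)].

(* Main.v *)
Require Import Defs.
From mathcomp Require Import all_boot all_order all_algebra.
From mathcomp Require Import all_classical all_reals all_analysis.
From Stdlib Require List.
From mathcomp Require Import zify.
From Stdlib Require Import Lia.
Local Open Scope classical_set_scope.

From mathcomp Require Import lra.
Import Order.TTheory GRing.Theory Num.Theory.
Import numFieldNormedType.Exports.
Lemma list_countable {A : Type} (s : seq A) : countable [set i | List.In i s].
Proof.
apply: finite_set_countable.
elim: s => [|a s IH] /=.
  have -> : [set i | False] = @set0 A by apply/seteqP; split => [x []|x []].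
  exact: finite_set0.
have -> : [set i | a = i \/ List.In i s] = [set a] `|` [set i | List.In i s].
  by apply/seteqP; split=> x /= [->|h]; by [left|right].
by rewrite finite_setU; split => //; exact: finite_set1.
Qed.

Section Comb.
Context (T : topologicalType) (A : Type) (I : set A) (W : A -> set T) (N : nat).
Context (ccc : ccc_on [set: T]).
Context (Wo : forall i, I i -> open (W i)).
Context (Wn : forall i, I i -> W i !=set0).
Context (ord : forall x (s : seq A), List.NoDup s ->
  (forall i, List.In i s -> I i /\ W i x) -> (size s < N)%N).

Let O (s : seq A) : set T := [set y | forall i, List.In i s -> W i y].
Let good (s : seq A) := [/\ List.NoDup s, (forall i, List.In i s -> I i), O s !=set0 &
  (forall y, O s y -> forall i, I i -> W i y -> List.In i s)].

Let O_open s : (forall i, List.In i s -> I i) -> open (O s).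
Proof.
elim: s => [|a s IH] Hs.
  have -> : O [::] = setT by apply/seteqP; split => [x _ //|x _ i []].
  exact: openT.
have -> : O (a :: s) = W a `&` O s.
  apply/seteqP; split=> x /=.
    by move=> h; split; [apply: h; left|move=> i hi; apply: h; right].
  by move=> [h1 h2] i [<-|hi] //; exact: h2.
apply: openI; first by apply/Wo/Hs; left.
by apply: IH => i hi; apply: Hs; right.
Qed.

Let same s t y : good s -> good t -> O s y -> O t y -> O s = O t.
Proof.
move=> [_ Is _ Ms] [_ It _ Mt] Osy Oty.
have E : forall i, List.In i s <-> List.In i t.
  move=> i; split=> h.
    by apply: (Mt y Oty) => //; [exact: Is|exact: Osy].
  by apply: (Ms y Osy) => //; [exact: It|exact: Oty].
apply/seteqP; split=> z /= h i hi; apply: h; exact/E.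
Qed.

Let cover : forall k s i, (N - size s <= k)%N -> List.NoDup s ->
  (forall j, List.In j s -> I j) -> O s !=set0 -> List.In i s ->
  exists t, good t /\ List.In i t.
Proof.
elim=> [|k IH] s i hk nd Is [y Oy] ins.
  exfalso.
  have := @ord y s nd (fun j hj => conj (Is j hj) (Oy j hj)).
  move=> h; lia.
case: (pselect (forall z, O s z -> forall j, I j -> W j z -> List.In j s)) => hmax.
  by exists s; split => //; split => //; exists y.
move: hmax => /existsNP [z /not_implyP [Oz /existsNP [j /not_implyP [Ij /not_implyP [Wj nj]]]]].
apply: (IH (j :: s)) => //.
- have := @ord y s nd (fun j hj => conj (Is j hj) (Oy j hj)).
  move=> h /=; lia.
- by constructor.
- by move=> j' [<-|h] //; exact: Is.
- by exists z => j' [<-|h] //; exact: Oz.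
- by right.
Qed.

Lemma comb_countable : countable I.
Proof.
pose G := [set Z | exists s, good s /\ Z = O s].
have cG : countable G.
  apply: ccc.
  - move=> U [s [gs ->]]; exists (O s); split; last by rewrite setIT.
    by apply: O_open; case: gs.
  - by move=> U [s [[] ? ? ? ? ->]].
  - move=> U V [s [gs ->]] [t [gt ->]] neq.
    apply/seteqP; split=> // y [Osy Oty]; apply: neq; exact: (@same s t y gs gt Osy Oty).
pose H Z := [set i | exists s, good s /\ Z = O s /\ List.In i s].
have : I `<=` \bigcup_(Z in G) H Z.
  move=> i Ii; have [y Wy] := Wn i Ii.
  have [t [gt it]] : exists t, good t /\ List.In i t.
    apply: (@cover N [:: i] i) => //.
    - by rewrite leq_subr.
    - by constructor => //; constructor.
    - by move=> j [<-|[]].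
    - by exists y => j [<-|[]].
    - by left.
  by exists (O t); [exists t|exists t].
move/subset_card_le/sub_countable; apply.
apply: bigcup_countable => // Z [s0 [gs0 ->]].
apply: sub_countable (list_countable s0).
apply: subset_card_le => i [s [gs [E ins]]].
case: gs0 => _ _ [y Oy] M0; apply: (M0 y Oy).
  by case: gs => _ Is _ _; exact: Is.
by case: gs => _ _ _ _; rewrite E in Oy; exact: Oy.
Qed.
End Comb.

Local Open Scope ring_scope.

Lemma ury (R : realType) (K : topologicalType) (V : set K) (p : K) :
  hausdorff_space K -> compact [set: K] -> open V -> V p ->
  exists g : K -> R, [/\ continuous g, (forall x, 0 <= g x <= 1), g p = 1 &
     forall x, ~ V x -> g x = 0].
Proof.
move=> hK cK oV Vp.
have := @normal_completely_regular R K (compact_normal hK cK) (hausdorff_accessible hK) p (~` V).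
move=> /(_ (open_closedC oV)) /(_ (fun h => h Vp)).
move=> /(@uniform_separatorP K R) [f [cf f01 fp fV]].
exists (fun x => 1 - f x); split.
- move=> x; apply: continuousB; [exact: cst_continuous|exact: cf].
- move=> x; have := f01 (f x) (ex_intro2 _ _ x I erefl).
  rewrite /= in_itv /= => /andP [h1 h2]; apply/andP; split; lra.
- by rewrite (fp (f p) (ex_intro2 _ _ p erefl erefl)) subr0.
- by move=> x nVx; rewrite (fV (f x) (ex_intro2 _ _ x nVx erefl)) subrr.
Qed.

Theorem proposition3p15 (R : realType) (K : topologicalType) (F : set K) :
  hausdorff_space K -> compact [set: K] -> closed F ->
  ccc_on [set: K] ->
  (exists E : (K -> R) -> (K -> R), extension_operator F E) ->
  ccc_on F.
Proof.
move=> hK cK clF ccc [E [Ewd Ec Elin [M HM] Eext]] UU Uo Un Ud.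
have hg : forall U : set K, exists g : K -> R, UU U ->
  [/\ continuous g, (forall x, 0 <= g x <= 1), (exists2 p, F p /\ U p & g p = 1)
    & (forall x, F x -> ~ U x -> g x = 0)].
  move=> U; case: (pselect (UU U)) => hU; last by exists (fun=> 0).
  have [V [oV eU]] := Uo U hU; have [p Up] := Un U hU.
  have Vp : V p by move: Up; rewrite eU => -[].
  have [g [cg g01 gp gV]] := ury R K V p hK cK oV Vp.
  exists g => _; split => //.
    by exists p => //; split => //; move: Up; rewrite eU => -[].
  by move=> x Fx nUx; apply: gV => Vx; apply: nUx; rewrite eU.
have [g Hg] := choice hg.
have CFg : forall U, UU U -> CF F (g U).
  by move=> U /Hg [cg _ _ _]; exact: continuous_subspaceT.
have csum : forall s : seq (set K), (forall U, List.In U s -> UU U) ->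
    continuous (fun y => \sum_(U <- s) g U y).
  elim=> [|a s IH] Hs.
    have -> : (fun y => \sum_(U <- [::]) g U y) = (fun _ => 0 : R).
      by apply/funext=> y; rewrite big_nil.
    exact: cst_continuous.
  have -> : (fun y => \sum_(U <- a :: s) g U y) = (fun y => g a y + \sum_(U <- s) g U y).
    by apply/funext=> y; rewrite big_cons.
  have [cga _ _ _] := Hg a (Hs a (or_introl erefl)).
  move=> x; apply: continuousD; first exact: cga.
  by apply: IH => U hU; apply: Hs; right.
have CF0 : CF F (fun _ : K => 0 : R).
  by apply: continuous_subspaceT; exact: cst_continuous.
have E0 : E (fun _ => 0) = (fun _ => 0).
  have := Elin (-1) _ _ CF0 CF0.
  have -> : (fun x : K => -1 * 0 + 0) = (fun _ => 0 : R).
    by apply/funext=> x; rewrite mulr0 addr0.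
  move=> h; apply/funext => x; have := congr1 (fun h => h x) h => /= ->.
  by rewrite mulN1r addNr.
have Esum : forall s : seq (set K), (forall U, List.In U s -> UU U) ->
    E (fun y => \sum_(U <- s) g U y) = (fun x => \sum_(U <- s) E (g U) x).
  elim=> [|a s IH] Hs.
    have -> : (fun y => \sum_(U <- [::]) g U y) = (fun _ => 0 : R).
      by apply/funext=> y; rewrite big_nil.
    by rewrite E0; apply/funext => x; rewrite big_nil.
  have Hs' : forall U, List.In U s -> UU U by move=> U hU; apply: Hs; right.
  have -> : (fun y => \sum_(U <- a :: s) g U y) =
      (fun y => 1 * g a y + \sum_(U <- s) g U y).
    by apply/funext=> y; rewrite big_cons mul1r.
  have cs : CF F (fun y => \sum_(U <- s) g U y).
    by apply: continuous_subspaceT; exact: csum.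
  rewrite (Elin 1 (g a) _ (CFg a (Hs a (or_introl erefl))) cs) IH //; apply/funext => x; by rewrite big_cons mul1r.
have Sb : forall s : seq (set K), List.NoDup s -> (forall U, List.In U s -> UU U) ->
    forall y, F y -> (0 <= \sum_(U <- s) g U y <= 1) /\
      ((forall U, List.In U s -> ~ U y) -> \sum_(U <- s) g U y = 0).
  elim=> [|a s IH] nd Hs y Fy.
    by rewrite big_nil lexx ler01.
  move: nd => /List.NoDup_cons_iff [na nds].
  have Ha : UU a by apply: Hs; left.
  have [/andP [h0 h1] hs] := IH nds (fun U h => Hs U (or_intror h)) y Fy.
  have [cga g01a pa ga0] := Hg a Ha.
  rewrite big_cons.
  case: (pselect (a y)) => ay.
    have -> : \sum_(U <- s) g U y = 0.
      apply: hs => U hU Uy.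
      have neq : a <> U by move=> eaU; apply: na; rewrite eaU.
      have : (a `&` U) y by [].
      by rewrite (Ud a U Ha (Hs U (or_intror hU)) neq).
    rewrite addr0; split; first exact: g01a.
    by move=> H; exfalso; apply: (H a) => //; left.
  rewrite (ga0 y Fy ay) add0r; split; first by rewrite h0 h1.
  by move=> H; apply: hs => U hU; apply: H; right.
pose N := (Num.trunc (2 * M)).+1.
have hN : 2 * M < N%:R by exact: truncnS_gt.
apply: (@comb_countable K (set K) UU (fun U => [set x | 1/2 < E (g U) x]) N ccc).
- move=> U hU; apply: (@open_comp _ _ (E (g U)) [set y | 1/2 < y]).
    by move=> x _; exact: (Ec _ (CFg U hU) x).
  exact: open_gt.
- move=> U hU; have [_ _ [p [Fp Up] gp] _] := Hg U hU.
  by exists p; rewrite /= (Eext _ (CFg U hU) p Fp) gp; lra.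
- move=> x s nd Hs.
  have HU : forall U, List.In U s -> UU U by move=> U /Hs [].
  have low : forall s' : seq (set K), (forall U, List.In U s' -> 1/2 < E (g U) x) ->
      (size s')%:R / 2 <= \sum_(U <- s') E (g U) x.
    elim=> [|a s' IH] H.
      by rewrite big_nil /= mul0r.
    rewrite big_cons /= -addn1 natrD.
    have := IH (fun U h => H U (or_intror h)).
    have := H a (or_introl erefl).
    lra.
  have l := low s (fun U h => proj2 (Hs U h)).
  have CFS : CF F (fun y => \sum_(U <- s) g U y).
    exact/continuous_subspaceT/csum.
  have := HM _ 1 CFS.
  move=> /(_ _) /(_ x).
  rewrite Esum // mulr1 => hb.
  have hb' : `|\sum_(U <- s) E (g U) x| <= M.
    apply: hb => y Fy; have [/andP [h0 h1] _] := Sb s nd HU y Fy.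
    by rewrite ger0_norm.
  have := ler_norm (\sum_(U <- s) E (g U) x).
  rewrite -(ltr_nat R).
  move: l hb' hN; lra.
Qed.
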